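(* Let $T$ be a triangle from a shape-regular family ($h_T\le\varrho r_T$), $\Gamma_{h,T}$ an open line segment with endpoints on $\partial T$ dividing $T$ into nonempty open parts $T_h^\pm$, and $\mu^\pm>0$. There is a constant $C>0$ independent of $h_T$ and of the location of $\Gamma_{h,T}$ such that $$\|\nabla\mathbf{v}_h\|_{L^2(\partial T)}\le Ch_T^{-1/2}\|\nabla\mathbf{v}_h\|_{L^2(T)}\qquad\forall(\mathbf{v}_h,q_h)\in\mathbf{V}M_h^{IFE}(T).$$
   Context: $\mathbf{n}_h$ is the unit normal of $\Gamma_{h,T}$ pointing into $T_h^+$; $\sigma(\mu,\mathbf{v},q)=2\mu\boldsymbol{\epsilon}(\mathbf{v})-q\mathbb{I}$, $\boldsymbol{\epsilon}(\mathbf{v})=\frac12(\nabla\mathbf{v}+(\nabla\mathbf{v})^T)$. $\mathbf{V}M_h^{IFE}(T)$ is the set of pairs $(\mathbf{v},q)$ equal to $(\mathbf{v}^\pm,q^\pm)$ on $T_h^\pm$, where $\mathbf{v}^\pm\in P_1(T)^2$, $q^\pm\in P_0(T)$ satisfy $\sigma(\mu^+,\mathbf{v}^+,q^+)\mathbf{n}_h=\sigma(\mu^-,\mathbf{v}^-,q^-)\mathbf{n}_h$, $\mathbf{v}^+=\mathbf{v}^-$ on $\Gamma_{h,T}$, $\nabla\cdot\mathbf{v}^+=\nabla\cdot\mathbf{v}^-$. On $\partial T$, $\nabla\mathbf{v}_h$ is the trace of the piecewise constant gradient. *)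

(* Defs.v *)
From HB Require Import structures.
From mathcomp Require Import all_boot all_order all_algebra.
From mathcomp Require Import all_classical all_reals all_analysis.
Set Implicit Arguments. Unset Strict Implicit. Unset Printing Implicit Defensive.
Import Order.TTheory GRing.Theory Num.Theory.
Import numFieldNormedType.Exports.
Local Open Scope classical_set_scope.
Local Open Scope ring_scope.

Section IFE.
Variable R : realType.

Definition pt := (R * R)%type.
Definition padd (p q : pt) : pt := (p.1 + q.1, p.2 + q.2).
Definition psub (p q : pt) : pt := (p.1 - q.1, p.2 - q.2).
Definition pscale (t : R) (p : pt) : pt := (t * p.1, t * p.2).
Definition dot (p q : pt) : R := p.1 * q.1 + p.2 * q.2.
Definition enorm (p : pt) : R := Num.sqrt (dot p p).
Definition det2 (p q : pt) : R := p.1 * q.2 - p.2 * q.1.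

Definition tri_nondeg (a b c : pt) : Prop := det2 (psub b a) (psub c a) != 0.

Definition tri (a b c : pt) : set pt :=
  [set x | exists l1 l2 l3 : R, [/\ 0 < l1, 0 < l2, 0 < l3, l1 + l2 + l3 = 1 &
       x = padd (pscale l1 a) (padd (pscale l2 b) (pscale l3 c))]].

Definition hT (a b c : pt) : R :=
  sup [set d | exists x y, [/\ tri a b c x, tri a b c y & d = enorm (psub x y)]].

Definition rT (a b c : pt) : R :=
  sup [set r | 0 < r /\ exists z : pt,
          [set y | enorm (psub y z) < r] `<=` tri a b c].

Definition side (x0 n x : pt) : R := dot (psub x x0) n.
Definition Tplus (a b c x0 n : pt) : set pt := tri a b c `&` [set x | 0 < side x0 n x].
Definition Tminus (a b c x0 n : pt) : set pt := tri a b c `&` [set x | side x0 n x < 0].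
Definition Gamma (a b c x0 n : pt) : set pt := tri a b c `&` [set x | side x0 n x = 0].

(* affine (P1)^2 map x |-> A x + b ; A is its (constant) gradient, A i j = d v_i / d x_j *)
Definition affine (A : 'M[R]_2) (b : pt) (x : pt) : pt :=
  (A 0 0 * x.1 + A 0 1 * x.2 + b.1, A 1 0 * x.1 + A 1 1 * x.2 + b.2).
Definition mxapp (M : 'M[R]_2) (p : pt) : pt :=
  (M 0 0 * p.1 + M 0 1 * p.2, M 1 0 * p.1 + M 1 1 * p.2).
(* sigma(mu, v, q) = 2 mu eps(v) - q I = mu (grad v + grad v^T) - q I *)
Definition stress (mu : R) (A : 'M[R]_2) (q : R) : 'M[R]_2 :=
  mu *: (A + A^T) - q%:M.

(* (v, q) in VM_h^IFE(T): v = A+ x + b+, q = q+ on T^+, v = A- x + b-, q = q- on T^- *)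
Definition IFE (mup mum : R) (a b c x0 n : pt)
    (Ap : 'M[R]_2) (bp : pt) (qp : R) (Am : 'M[R]_2) (bm : pt) (qm : R) : Prop :=
  [/\ mxapp (stress mup Ap qp) n = mxapp (stress mum Am qm) n,
      (forall x, Gamma a b c x0 n x -> affine Ap bp x = affine Am bm x) &
      \tr Ap = \tr Am].

(* piecewise constant gradient (also used for its trace on the boundary) *)
Definition gradv (x0 n : pt) (Ap Am : 'M[R]_2) (x : pt) : 'M[R]_2 :=
  if 0 < side x0 n x then Ap else Am.

Definition frob2 (A : 'M[R]_2) : R := \sum_(i < 2) \sum_(j < 2) A i j ^+ 2.

Definition leb2 := ((@lebesgue_measure R) \x (@lebesgue_measure R))%E.

Definition L2T (a b c : pt) (f : pt -> R) : R :=
  Num.sqrt (\int[leb2]_(x in tri a b c) (f x ^+ 2)).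

Definition seg_int (p q : pt) (f : pt -> R) : R :=
  enorm (psub q p) *
    \int[@lebesgue_measure R]_(t in `[0, 1]) f (padd p (pscale t (psub q p))).

Definition L2bdT (a b c : pt) (f : pt -> R) : R :=
  Num.sqrt (seg_int a b (fun x => f x ^+ 2) + seg_int b c (fun x => f x ^+ 2)
            + seg_int c a (fun x => f x ^+ 2)).

Definition gradnorm (x0 n : pt) (Ap Am : 'M[R]_2) (x : pt) : R :=
  Num.sqrt (frob2 (gradv x0 n Ap Am x)).

End IFE.

(* Main.v *)
Require Import Defs.
From HB Require Import structures.
From mathcomp Require Import all_boot all_order all_algebra.
From mathcomp Require Import all_classical all_reals all_analysis.
From mathcomp Require Import ring lra.
Import Order.TTheory GRing.Theory Num.Theory.
Local Open Scope classical_set_scope.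
Local Open Scope ring_scope.
Set Implicit Arguments. Unset Strict Implicit.

Section Alg.
Variable R : realType.

Lemma cs4 (x1 x2 x3 x4 y1 y2 y3 y4 : R) :
  (x1*y1 + x2*y2 + x3*y3 + x4*y4)^+2 <=
  (x1^+2 + x2^+2 + x3^+2 + x4^+2) * (y1^+2 + y2^+2 + y3^+2 + y4^+2).
Proof.
rewrite -subr_ge0.
have -> : (x1^+2 + x2^+2 + x3^+2 + x4^+2) * (y1^+2 + y2^+2 + y3^+2 + y4^+2)
  - (x1*y1 + x2*y2 + x3*y3 + x4*y4)^+2 =
  (x1*y2 - x2*y1)^+2 + (x1*y3 - x3*y1)^+2 + (x1*y4 - x4*y1)^+2
  + (x2*y3 - x3*y2)^+2 + (x2*y4 - x4*y2)^+2 + (x3*y4 - x4*y3)^+2 by ring.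
by rewrite !addr_ge0 // sqr_ge0.
Qed.

Definition Kc (mup mum : R) :=
  2 + 4 * (((mum - mup) / mup)^+2 + ((mum - mup) / mum)^+2).

Lemma key_half (mup mum n1 n2 a11 a12 a21 a22 b11 b12 b21 b22 : R) :
  0 < mup -> 0 < mum -> n1^+2 + n2^+2 = 1 ->
  let P := -n2*(2*a11*n1 + (a12+a21)*n2) + n1*((a12+a21)*n1 + 2*a22*n2) in
  let Q := -n2*(2*b11*n1 + (b12+b21)*n2) + n1*((b12+b21)*n1 + 2*b22*n2) in
  mup * P = mum * Q ->
  -n2*(a11-b11) + n1*(a12-b12) = 0 -> -n2*(a21-b21) + n1*(a22-b22) = 0 ->
  a11 + a22 = b11 + b22 ->
  a11^+2 + a12^+2 + a21^+2 + a22^+2 <=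
    (2 + 4 * ((mum - mup) / mup)^+2) * (b11^+2 + b12^+2 + b21^+2 + b22^+2).
Proof.
move=> hp hm hn P Q hPQ h1 h2 h3.
pose s := -n2*((a11-b11)*n1 + (a12-b12)*n2) + n1*((a21-b21)*n1 + (a22-b22)*n2).
have hfE : (a11-b11)^+2 + (a12-b12)^+2 + (a21-b21)^+2 + (a22-b22)^+2 = s^+2.
  pose u1 := (a11-b11)*n1 + (a12-b12)*n2.
  pose u2 := (a21-b21)*n1 + (a22-b22)*n2.
  have c11 : a11 - b11 = u1 * n1.
    have -> : u1 * n1 = (a11-b11)*(n1^+2+n2^+2) + n2*(-n2*(a11-b11) + n1*(a12-b12)) by rewrite /u1; ring.
    by rewrite hn h1; ring.
  have c12 : a12 - b12 = u1 * n2.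
    have -> : u1 * n2 = (a12-b12)*(n1^+2+n2^+2) - n1*(-n2*(a11-b11) + n1*(a12-b12)) by rewrite /u1; ring.
    by rewrite hn h1; ring.
  have c21 : a21 - b21 = u2 * n1.
    have -> : u2 * n1 = (a21-b21)*(n1^+2+n2^+2) + n2*(-n2*(a21-b21) + n1*(a22-b22)) by rewrite /u2; ring.
    by rewrite hn h2; ring.
  have c22 : a22 - b22 = u2 * n2.
    have -> : u2 * n2 = (a22-b22)*(n1^+2+n2^+2) - n1*(-n2*(a21-b21) + n1*(a22-b22)) by rewrite /u2; ring.
    by rewrite hn h2; ring.
  have hun : u1 * n1 + u2 * n2 = 0.
    by rewrite -c11 -c22; lra.
  have hs : s = -n2 * u1 + n1 * u2 by [].
  rewrite hs c11 c12 c21 c22.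
  have -> : (u1 * n1) ^+ 2 + (u1 * n2) ^+ 2 + (u2 * n1) ^+ 2 + (u2 * n2) ^+ 2
     = (u1^+2 + u2^+2) * (n1^+2+n2^+2) by ring.
  have -> : (u1^+2 + u2^+2) = ((u1^+2 + u2^+2) * (n1^+2+n2^+2)) by rewrite hn mulr1.
  have -> : (u1^+2 + u2^+2) * (n1^+2+n2^+2) = (u1 * n1 + u2 * n2)^+2 + (-n2 * u1 + n1 * u2)^+2 by ring.
  by rewrite hun hn; ring.
have hsPQ : s = P - Q.
  have -> : P - Q = s + n1 * (-n2*(a11-b11) + n1*(a12-b12)) + n2 * (-n2*(a21-b21) + n1*(a22-b22))
    by rewrite /P /Q /s; ring.
  by rewrite h1 h2; ring.
have hsQ : s = (mum - mup) / mup * Q.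
  rewrite hsPQ; apply: (mulfI (lt0r_neq0 hp)); rewrite mulrA mulrCA mulfV ?lt0r_neq0 //.
  by rewrite mulrBr hPQ; ring.
have hQ : Q^+2 <= 2 * (b11^+2 + b12^+2 + b21^+2 + b22^+2).
  have -> : Q = b11 * (-2*n1*n2) + b12 * (n1^+2 - n2^+2) + b21 * (n1^+2 - n2^+2) + b22 * (2*n1*n2)
    by rewrite /Q; ring.
  apply: le_trans (cs4 _ _ _ _ _ _ _ _) _.
  have -> : (b11 ^+ 2 + b12 ^+ 2 + b21 ^+ 2 + b22 ^+ 2) *
   ((-2 * n1 * n2) ^+ 2 + (n1 ^+ 2 - n2 ^+ 2) ^+ 2 + (n1 ^+ 2 - n2 ^+ 2) ^+ 2 + (2 * n1 * n2) ^+ 2)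
   = (b11 ^+ 2 + b12 ^+ 2 + b21 ^+ 2 + b22 ^+ 2) * (2 * (n1^+2 + n2^+2)^+2) by ring.
  by rewrite hn; lra.
have hA : a11^+2 + a12^+2 + a21^+2 + a22^+2 <=
   2 * (b11^+2 + b12^+2 + b21^+2 + b22^+2) + 2 * ((a11-b11)^+2 + (a12-b12)^+2 + (a21-b21)^+2 + (a22-b22)^+2).
  rewrite -subr_ge0.
  have -> : 2 * (b11^+2 + b12^+2 + b21^+2 + b22^+2) + 2 * ((a11-b11)^+2 + (a12-b12)^+2 + (a21-b21)^+2 + (a22-b22)^+2) - (a11^+2 + a12^+2 + a21^+2 + a22^+2)
   = (a11 - 2*b11)^+2 + (a12 - 2*b12)^+2 + (a21 - 2*b21)^+2 + (a22 - 2*b22)^+2 by ring.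
  by rewrite !addr_ge0 // sqr_ge0.
apply: (le_trans hA); rewrite hfE hsQ exprMn.
set c := ((mum - mup) / mup)^+2.
have c0 : 0 <= c by rewrite /c sqr_ge0.
set fB := b11^+2 + b12^+2 + b21^+2 + b22^+2.
have := ler_wpM2l c0 hQ.
rewrite -/fB => h.
have e1 : c * (2 * fB) = 2 * (c * fB) by ring.
have e2 : (2 + 4 * c) * fB = 2 * fB + 4 * (c * fB) by ring.
rewrite e2; lra.
Qed.


Lemma sum2 (F : 'I_2 -> R) : \sum_(i < 2) F i = F 0 + F 1.
Proof. rewrite !big_ord_recl big_ord0 addr0; congr (F _ + F _); exact: val_inj. Qed.
Lemma frobE (A : 'M[R]_2) : frob2 A = A 0 0 ^+2 + A 0 1 ^+2 + A 1 0 ^+2 + A 1 1 ^+2.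
Proof. by rewrite /frob2 !sum2 addrA. Qed.
Lemma trE (A : 'M[R]_2) : \tr A = A 0 0 + A 1 1.
Proof. by rewrite /mxtrace sum2. Qed.
Lemma stressE mu (A : 'M[R]_2) q n :
  mxapp (stress mu A q) n =
   (mu * (2 * A 0 0 * n.1 + (A 0 1 + A 1 0) * n.2) - q * n.1,
    mu * ((A 0 1 + A 1 0) * n.1 + 2 * A 1 1 * n.2) - q * n.2).
Proof. rewrite /mxapp /stress !mxE /= mulr1n mulr0n; congr (_,_); ring. Qed.

Lemma frob2_ge0 (A : 'M[R]_2) : 0 <= frob2 A.
Proof. by rewrite frobE !addr_ge0 // sqr_ge0. Qed.

Lemma Kc_ge1 mup mum : 1 <= Kc mup mum.
Proof.
rewrite /Kc; have h1 := sqr_ge0 ((mum - mup) / mup); have h2 := sqr_ge0 ((mum - mup) / mum).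
lra.
Qed.

Lemma frob_bound mup mum (Ap Am : 'M[R]_2) qp qm (n : pt R) :
  0 < mup -> 0 < mum -> dot n n = 1 ->
  mxapp (stress mup Ap qp) n = mxapp (stress mum Am qm) n ->
  -n.2*(Ap 0 0 - Am 0 0) + n.1*(Ap 0 1 - Am 0 1) = 0 ->
  -n.2*(Ap 1 0 - Am 1 0) + n.1*(Ap 1 1 - Am 1 1) = 0 ->
  \tr Ap = \tr Am ->
  frob2 Ap <= Kc mup mum * frob2 Am /\ frob2 Am <= Kc mup mum * frob2 Ap.
Proof.
move=> hp hm hn hs h1 h2 ht.
rewrite !stressE in hs; case: hs => e0 e1.
rewrite !trE in ht.
have hn' : n.1^+2 + n.2^+2 = 1 by rewrite -hn /dot; ring.
have hPQ : mup * (-n.2*(2*Ap 0 0*n.1 + (Ap 0 1+Ap 1 0)*n.2) + n.1*((Ap 0 1+Ap 1 0)*n.1 + 2*Ap 1 1*n.2))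
   = mum * (-n.2*(2*Am 0 0*n.1 + (Am 0 1+Am 1 0)*n.2) + n.1*((Am 0 1+Am 1 0)*n.1 + 2*Am 1 1*n.2)).
  have -> : mup * (-n.2*(2*Ap 0 0*n.1 + (Ap 0 1+Ap 1 0)*n.2) + n.1*((Ap 0 1+Ap 1 0)*n.1 + 2*Ap 1 1*n.2))
    = -n.2 * (mup * (2 * Ap 0 0 * n.1 + (Ap 0 1 + Ap 1 0) * n.2) - qp * n.1)
      + n.1 * (mup * ((Ap 0 1 + Ap 1 0) * n.1 + 2 * Ap 1 1 * n.2) - qp * n.2) by ring.
  rewrite e0 e1; ring.
have K1 : 2 + 4 * ((mum - mup) / mup)^+2 <= Kc mup mum.
  by rewrite /Kc; have := sqr_ge0 ((mum - mup) / mum); lra.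
have K2 : 2 + 4 * ((mup - mum) / mum)^+2 <= Kc mup mum.
  rewrite /Kc; have := sqr_ge0 ((mum - mup) / mup).
  have -> : ((mup - mum) / mum)^+2 = ((mum - mup) / mum)^+2 by rewrite -sqrrN; congr (_^+2); ring.
  lra.
rewrite !frobE; split.
  apply: le_trans (key_half hp hm hn' hPQ h1 h2 ht) _.
  by apply: ler_wpM2r => //; rewrite !addr_ge0 // sqr_ge0.
have h1' : -n.2*(Am 0 0 - Ap 0 0) + n.1*(Am 0 1 - Ap 0 1) = 0 by lra.
have h2' : -n.2*(Am 1 0 - Ap 1 0) + n.1*(Am 1 1 - Ap 1 1) = 0 by lra.
apply: le_trans (key_half hm hp hn' (esym hPQ) h1' h2' (esym ht)) _.
by apply: ler_wpM2r => //; rewrite !addr_ge0 // sqr_ge0.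
Qed.

End Alg.

Section G.
Variable R : realType.

Lemma pos_pert (w m g G : R) : 0 < m -> m <= w -> `|g| < G ->
  0 < w + (m / G) * g.
Proof.
move=> m0 mw gG.
have G0 : 0 < G by apply: le_lt_trans gG.
have e0 : 0 < m / G by rewrite divr_gt0.
have h1 : (m / G) * `|g| < m.
  by rewrite mulrAC ltr_pdivrMr // ltr_pM2l.
have h2 : - ((m / G) * `|g|) <= (m / G) * g.
  rewrite -mulrN; apply: ler_wpM2l; first exact: ltW.
  have := ler_norm (- g); rewrite normrN; lra.
lra.
Qed.

Lemma tangent_eq (a b c x0 n : pt R) (Ap : 'M[R]_2) bp (Am : 'M[R]_2) bm :
  tri_nondeg a b c -> Tplus a b c x0 n !=set0 -> Tminus a b c x0 n !=set0 ->
  (forall x, Gamma a b c x0 n x -> affine Ap bp x = affine Am bm x) ->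
  -n.2*(Ap 0 0 - Am 0 0) + n.1*(Ap 0 1 - Am 0 1) = 0 /\
  -n.2*(Ap 1 0 - Am 1 0) + n.1*(Ap 1 1 - Am 1 1) = 0.
Proof.
move=> hnd [p [[l1 [l2 [l3 [l1p l2p l3p ls Ep]]]] spp]].
move=> [q [[m1 [m2 [m3 [m1p m2p m3p ms Eq]]]] sqn]] hG.
subst p q.
move: hnd hG spp sqn.
case: a => a1 a2; case: b => b1 b2; case: c => c1 c2; case: x0 => x1 x2; case: n => n1 n2.
rewrite /tri_nondeg /det2 /= /side /dot /psub /padd /pscale /= => hnd hG.
set sp := (_ * n1 + _ * n2). set sq := (_ * n1 + _ * n2).
move=> spp sqn.
have l3E : l3 = 1 - l1 - l2 by lra.
have m3E : m3 = 1 - m1 - m2 by lra.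
have dp : 0 < sp - sq by lra.
have dn : sp - sq != 0 by rewrite lt0r_neq0.
pose w1 := (- sq * l1 + sp * m1) / (sp - sq).
pose w2 := (- sq * l2 + sp * m2) / (sp - sq).
pose w3 := (- sq * l3 + sp * m3) / (sp - sq).
have w1p : 0 < w1 by rewrite divr_gt0 // addr_gt0 // mulr_gt0 // oppr_gt0.
have w2p : 0 < w2 by rewrite divr_gt0 // addr_gt0 // mulr_gt0 // oppr_gt0.
have w3p : 0 < w3 by rewrite divr_gt0 // addr_gt0 // mulr_gt0 // oppr_gt0.
have ws : w1 + w2 + w3 = 1.
  rewrite /w1 /w2 /w3 l3E m3E; field; exact: dn.
pose g1 := (w1 * a1 + (w2 * b1 + w3 * c1), w1 * a2 + (w2 * b2 + w3 * c2)).
have sg1 : (g1.1 - x1) * n1 + (g1.2 - x2) * n2 = 0.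
  rewrite /g1 /w1 /w2 /w3 /=. move: dn; rewrite /sp /sq l3E m3E => dn. field. exact: dn.
pose D := (b1 - a1) * (c2 - a2) - (b2 - a2) * (c1 - a1).
pose bb := ((- n2) * (c2 - a2) - n1 * (c1 - a1)) / D.
pose bc := ((b1 - a1) * n1 - (b2 - a2) * (- n2)) / D.
have t1 : - bb - bc = - bb - bc by [].
have tE1 : (- bb - bc) * a1 + bb * b1 + bc * c1 = - n2.
  rewrite /bb /bc /D; field; exact: hnd.
have tE2 : (- bb - bc) * a2 + bb * b2 + bc * c2 = n1.
  rewrite /bb /bc /D; field; exact: hnd.
pose G := 1 + `|- bb - bc| + `|bb| + `|bc|.
pose m := Num.min w1 (Num.min w2 w3).
have m0 : 0 < m by rewrite /m !lt_min w1p w2p w3p.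
have mw1 : m <= w1 by rewrite /m ge_min lexx.
have mw2 : m <= w2 by rewrite /m !ge_min lexx orbT.
have mw3 : m <= w3 by rewrite /m !ge_min lexx !orbT.
have ga : `|- bb - bc| < G.
  by rewrite /G; have := normr_ge0 bb; have := normr_ge0 bc; lra.
have gb : `|bb| < G.
  by rewrite /G; have := normr_ge0 (- bb - bc); have := normr_ge0 bc; lra.
have gc : `|bc| < G.
  by rewrite /G; have := normr_ge0 (- bb - bc); have := normr_ge0 bb; lra.
have G0 : 0 < G by apply: le_lt_trans gb.
pose e := m / G.
have e0 : 0 < e by rewrite divr_gt0.
pose g2 := (g1.1 + e * (- n2), g1.2 + e * n1).
have Gg1 : Gamma (a1, a2) (b1, b2) (c1, c2) (x1, x2) (n1, n2) g1.
  split; last by rewrite /= /side /dot /psub /=.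
  by exists w1, w2, w3; split.
have Gg2 : Gamma (a1, a2) (b1, b2) (c1, c2) (x1, x2) (n1, n2) g2.
  split; last first.
    rewrite /= /side /dot /psub /=.
    have -> : (g1.1 + e * - n2 - x1) * n1 + (g1.2 + e * n1 - x2) * n2 =
      (g1.1 - x1) * n1 + (g1.2 - x2) * n2 by ring.
    exact: sg1.
  exists (w1 + e * (- bb - bc)), (w2 + e * bb), (w3 + e * bc); split.
  - exact: pos_pert.
  - exact: pos_pert.
  - exact: pos_pert.
  - by rewrite -ws; ring.
  rewrite /g2 /padd /pscale /= -tE1 -tE2; congr (_, _); ring.
have := hG _ Gg1; have := hG _ Gg2.
rewrite /affine; case=> e21 e22; case=> e11 e12.
have en : e != 0 by rewrite lt0r_neq0.
split.
  apply/eqP; rewrite -(mulrI_eq0 _ (lregP en)); apply/eqP.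
  have -> : e * (- n2 * (Ap 0 0 - Am 0 0) + n1 * (Ap 0 1 - Am 0 1)) =
    (Ap 0 0 * g2.1 + Ap 0 1 * g2.2 + bp.1 - (Am 0 0 * g2.1 + Am 0 1 * g2.2 + bm.1))
    - (Ap 0 0 * g1.1 + Ap 0 1 * g1.2 + bp.1 - (Am 0 0 * g1.1 + Am 0 1 * g1.2 + bm.1))
    by rewrite /g2 /=; ring.
  by rewrite e21 e11 !subrr.
apply/eqP; rewrite -(mulrI_eq0 _ (lregP en)); apply/eqP.
have -> : e * (- n2 * (Ap 1 0 - Am 1 0) + n1 * (Ap 1 1 - Am 1 1)) =
  (Ap 1 0 * g2.1 + Ap 1 1 * g2.2 + bp.2 - (Am 1 0 * g2.1 + Am 1 1 * g2.2 + bm.2))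
  - (Ap 1 0 * g1.1 + Ap 1 1 * g1.2 + bp.2 - (Am 1 0 * g1.1 + Am 1 1 * g1.2 + bm.2))
  by rewrite /g2 /=; ring.
by rewrite e22 e12 !subrr.
Qed.
End G.

Section I.
Variable R : realType.

Lemma int_mono d (T : measurableType d) (mu : {measure set T -> \bar R})
   (D1 D2 : set T) (f1 f2 : T -> R) :
  (forall x, 0 <= f1 x) -> (forall x, 0 <= f2 x) ->
  (forall x, D1 x -> D2 x) -> (forall x, D1 x -> f1 x <= f2 x) ->
  (\int[mu]_(x in D1) (f1 x)%:E <= \int[mu]_(x in D2) (f2 x)%:E)%E.
Proof.
move=> f10 f20 D12 f12.
rewrite !ge0_integralE; [|by move=> x _; rewrite lee_fin..].
apply: ereal_sup_le => _ [h hf <-]; exists h => //= x.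
apply: le_trans (hf x) _.
rewrite !patchE; case: ifPn => [/set_mem xD1|_].
  by rewrite ifT ?lee_fin ?f12 //; apply/mem_set/D12.
by case: ifPn => _; rewrite ?lee_fin.
Qed.

Lemma int_le_cst d (T : measurableType d) (mu : {measure set T -> \bar R})
   (D : set T) (f : T -> R) (M : R) : measurable D -> 0 <= M ->
  (forall x, 0 <= f x) -> (forall x, f x <= M) ->
  (\int[mu]_(x in D) (f x)%:E <= M%:E * mu D)%E.
Proof.
move=> mD M0 f0 fM.
rewrite -(integral_cst mu mD).
by apply: (@int_mono _ _ mu D D f (fun _ => M)).
Qed.

Lemma int_le_cst2 d (T : measurableType d) (mu : {measure set T -> \bar R})
   (D1 D2 : set T) (f : T -> R) (M : R) : measurable D2 -> 0 <= M ->
  (forall x, 0 <= f x) -> (forall x, f x <= M) -> (forall x, D1 x -> D2 x) ->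
  (\int[mu]_(x in D1) (f x)%:E <= M%:E * mu D2)%E.
Proof.
move=> mD M0 f0 fM D12.
rewrite -(integral_cst mu mD).
by apply: (@int_mono _ _ mu D1 D2 f (fun _ => M)).
Qed.

Lemma int_ge_cst d (T : measurableType d) (mu : {measure set T -> \bar R})
   (D1 D2 : set T) (f : T -> R) (m : R) : measurable D1 -> 0 <= m ->
  (forall x, 0 <= f x) -> (forall x, D1 x -> D2 x) -> (forall x, D1 x -> m <= f x) ->
  (m%:E * mu D1 <= \int[mu]_(x in D2) (f x)%:E)%E.
Proof.
move=> mD M0 f0 D12 fm.
rewrite -(integral_cst mu mD).
by apply: (@int_mono _ _ mu D1 D2 (fun _ => m) f).
Qed.

Lemma xfine_le (I : \bar R) (y : R) : (0 <= I)%E -> (I <= y%:E)%E -> fine I <= y.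
Proof. by case: I => [r| |] //=; rewrite lee_fin. Qed.

Lemma xfine_ge (I : \bar R) (x y : R) : (x%:E <= I)%E -> (I <= y%:E)%E -> x <= fine I.
Proof. by case: I => [r| |] //=; rewrite lee_fin. Qed.

End I.

Section H.
Variable R : realType.
Implicit Types a b c : pt R.

Lemma nsq (x : R) : `|x| ^+ 2 = x ^+ 2.
Proof. exact: real_normK (num_real x). Qed.

Lemma enorm_le (v : pt R) : enorm v <= `|v.1| + `|v.2|.
Proof.
have h : `|v.1| + `|v.2| = Num.sqrt ((`|v.1| + `|v.2|)^+2).
  by rewrite sqrtr_sqr (@ger0_norm _ (`|v.1| + `|v.2|)) // addr_ge0.
rewrite h /enorm ler_sqrt ?sqr_ge0 // /dot.
have := nsq v.1; have := nsq v.2; have := normr_ge0 v.1; have := normr_ge0 v.2.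
nra.
Qed.

Lemma enorm_scale (k : R) (v : pt R) : 0 <= k -> enorm (pscale k v) = k * enorm v.
Proof.
move=> k0; rewrite /enorm /dot /pscale /=.
have -> : k * v.1 * (k * v.1) + k * v.2 * (k * v.2) = k ^+ 2 * (v.1 * v.1 + v.2 * v.2) by ring.
by rewrite sqrtrM ?sqr_ge0 // sqrtr_sqr ger0_norm.
Qed.

Definition Bnd a b c := `|a.1| + `|b.1| + `|c.1| + `|a.2| + `|b.2| + `|c.2|.

Lemma comb_le (l1 l2 l3 x y z : R) : 0 < l1 -> 0 < l2 -> 0 < l3 -> l1 + l2 + l3 = 1 ->
  `|l1 * x + (l2 * y + l3 * z)| <= `|x| + `|y| + `|z|.
Proof.
move=> h1 h2 h3 hs.
have a1 : `|l1*x| <= `|x| by rewrite normrM ger0_norm; [apply: ler_piMl => //; lra | lra].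
have a2 : `|l2*y| <= `|y| by rewrite normrM ger0_norm; [apply: ler_piMl => //; lra | lra].
have a3 : `|l3*z| <= `|z| by rewrite normrM ger0_norm; [apply: ler_piMl => //; lra | lra].
have e1 := ler_normD (l1*x) (l2*y + l3*z); have e2 := ler_normD (l2*y) (l3*z).
lra.
Qed.

Lemma tri_box a b c x : tri a b c x -> `|x.1| <= Bnd a b c /\ `|x.2| <= Bnd a b c.
Proof.
case=> l1 [l2 [l3 [h1 h2 h3 hs ->]]]; rewrite /Bnd /padd /pscale /=.
have := comb_le a.1 b.1 c.1 h1 h2 h3 hs; have := comb_le a.2 b.2 c.2 h1 h2 h3 hs.
have := normr_ge0 a.1; have := normr_ge0 b.1; have := normr_ge0 c.1.
have := normr_ge0 a.2; have := normr_ge0 b.2; have := normr_ge0 c.2.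
move=> *; split; lra.
Qed.

Definition hset a b c := [set d | exists x y, [/\ tri a b c x, tri a b c y & d = enorm (psub x y)]].

Lemma hset_ub a b c : has_ubound (hset a b c).
Proof.
exists (4 * Bnd a b c) => _ [x [y [tx ty ->]]].
have [hx1 hx2] := tri_box tx; have [hy1 hy2] := tri_box ty.
apply: le_trans (enorm_le _) _; rewrite /psub /=.
have := ler_normB x.1 y.1; have := ler_normB x.2 y.2. lra.
Qed.

Lemma le_hT a b c x y : tri a b c x -> tri a b c y -> enorm (psub x y) <= hT a b c.
Proof.
move=> tx ty; apply: (ub_le_sup (hset_ub a b c)).
by exists x, y.
Qed.

Definition comb (l1 l2 l3 : R) a b c := padd (pscale l1 a) (padd (pscale l2 b) (pscale l3 c)).

Lemma tri_comb (l1 l2 l3 : R) a b c : 0 < l1 -> 0 < l2 -> 0 < l3 -> l1 + l2 + l3 = 1 ->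
  tri a b c (comb l1 l2 l3 a b c).
Proof. by move=> *; exists l1, l2, l3; split. Qed.

Lemma edge_of a b c (l1 l2 l3 k1 k2 k3 : R) (v : pt R) :
  0 < l1 -> 0 < l2 -> 0 < l3 -> l1 + l2 + l3 = 1 ->
  0 < k1 -> 0 < k2 -> 0 < k3 -> k1 + k2 + k3 = 1 ->
  psub (comb l1 l2 l3 a b c) (comb k1 k2 k3 a b c) = pscale (2^-1) v ->
  enorm v <= 2 * hT a b c.
Proof.
move=> ? ? ? ? ? ? ? ? e.
have := le_hT (tri_comb a b c _ _ _ _) (tri_comb a b c _ _ _ _) => /(_ l1 l2 l3 k1 k2 k3).
rewrite e enorm_scale ?invr_ge0 ?ler0n // => h.
have := h _ _ _ _ _ _ _ _ => //. lra.
Qed.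

Lemma edges a b c :
  [/\ enorm (psub b a) <= 2 * hT a b c, enorm (psub c b) <= 2 * hT a b c &
      enorm (psub a c) <= 2 * hT a b c].
Proof.
have p6 : (0:R) < 6^-1 by rewrite invr_gt0 ltr0n.
have p23 : (0:R) < 2/3 by rewrite divr_gt0 ?ltr0n.
have s1 : 6^-1 + 2/3 + 6^-1 = 1 :> R by field.
have s2 : 2/3 + 6^-1 + 6^-1 = 1 :> R by field.
have s3 : 6^-1 + 6^-1 + 2/3 = 1 :> R by field.
split.
- apply: (@edge_of _ _ _ (6^-1) (2/3) (6^-1) (2/3) (6^-1) (6^-1)) => //.
  by rewrite /comb /psub /padd /pscale /=; congr (_, _); field.
- apply: (@edge_of _ _ _ (6^-1) (6^-1) (2/3) (6^-1) (2/3) (6^-1)) => //.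
  by rewrite /comb /psub /padd /pscale /=; congr (_, _); field.
- apply: (@edge_of _ _ _ (2/3) (6^-1) (6^-1) (6^-1) (6^-1) (2/3)) => //.
  by rewrite /comb /psub /padd /pscale /=; congr (_, _); field.
Qed.

End H.

Section J.
Variable R : realType.
Lemma leb_cc (x y : R) : x <= y -> lebesgue_measure (`[x, y] : set R) = (y - x)%:E.
Proof.
move=> xy; rewrite lebesgue_measure_itv /=.
rewrite lte_fin; case: (ltrP x y) => h //.
have -> : x = y by apply/eqP; rewrite eq_le xy h.
by rewrite subrr.
Qed.
Lemma leb2_sq (x y : R) (u v : R) : leb2 (`[x, y] `*` `[u, v]) = (lebesgue_measure (`[x, y] : set R) * lebesgue_measure (`[u, v] : set R))%E.
Proof. rewrite /leb2 product_measure1E //. Qed.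
End J.

Section K.
Variable R : realType.
Implicit Types a b c : pt R.

Lemma rT_disc a b c : 0 < rT a b c -> exists r (z : pt R),
  [/\ rT a b c / 2 < r, 0 < r & [set y | enorm (psub y z) < r] `<=` tri a b c].
Proof.
rewrite /rT; set S := (X in sup X) => h.
have [[r0 Sr0]|nS] := pselect (S !=set0).
  have hl : sup S / 2 < sup S by lra.
  have [y [y0 [z hz]] hy] := sup_gt (ex_intro _ r0 Sr0) hl.
  by exists y, z; split.
have S0 : S = set0.
  by apply/seteqP; split => // x Sx; exfalso; apply: nS; exists x.
by move: h; rewrite S0 sup0 ltxx.
Qed.

Lemma sq_sub (z y : pt R) (r : R) : 0 < r -> `|y.1 - z.1| <= r / 2 ->
  `|y.2 - z.2| <= r / 2 -> enorm (psub y z) < r.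
Proof.
move=> r0 h1 h2.
rewrite /enorm /dot /psub /= -[X in _ < X](ger0_norm (ltW r0)) -sqrtr_sqr ltr_sqrt ?exprn_gt0 //.
have := nsq (y.1 - z.1); have := nsq (y.2 - z.2).
have := normr_ge0 (y.1 - z.1); have := normr_ge0 (y.2 - z.2).
have e : r / 2 * 2 = r by field.
nra.
Qed.

Lemma hT_pos a b c : tri_nondeg a b c -> 0 < hT a b c.
Proof.
move=> hnd; case: (edges a b c) => e1 _ _.
suff : 0 < enorm (psub b a) by lra.
rewrite /enorm sqrtr_gt0 ltNge; apply/negP => h.
move: hnd; rewrite /tri_nondeg /det2.
move: h; rewrite /dot /psub /=.
move: (b.1 - a.1) (b.2 - a.2) => u v h.
have hu : u = 0 by nra.
have hv : v = 0 by nra.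
by rewrite hu hv !mul0r subrr eqxx.
Qed.

Lemma seg_le (p q : pt R) (f : pt R -> R) M : (forall x, 0 <= f x) ->
  (forall x, f x <= M) -> seg_int p q f <= enorm (psub q p) * M.
Proof.
move=> f0 fM; rewrite /seg_int; apply: ler_wpM2l; first exact: sqrtr_ge0.
have M0 : 0 <= M by apply: le_trans (fM p).
rewrite /Rintegral; apply: xfine_le.
  by apply: integral_ge0 => x _; rewrite lee_fin.
apply: le_trans (int_le_cst _ _ M0 (fun x => f0 _) (fun x => fM _)) _.
  exact: measurable_itv.
have e : lebesgue_measure (`[0%R, 1%R] : set R) = 1%E by rewrite leb_cc ?ler01 // subr0.
rewrite -[X in (_ * X <= _)%E]/(lebesgue_measure (`[0%R, 1%R] : set R)) e. by rewrite mule1.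
Qed.

End K.

Section L.
Variable R : realType.
Implicit Types a b c : pt R.

Lemma int_lower a b c (z : pt R) (r m M : R) (f : pt R -> R) :
  0 < r -> 0 <= m -> (forall x, m <= f x) -> (forall x, f x <= M) ->
  (forall y, enorm (psub y z) < r -> tri a b c y) ->
  m * (r * r) <= \int[@leb2 R]_(x in tri a b c) f x.
Proof.
move=> r0 m0 mf fM hd.
have f0 x : 0 <= f x by apply: le_trans (mf x).
have M0 : 0 <= M by apply: le_trans (fM z).
pose B := Bnd a b c.
pose sq := (`[z.1 - r/2, z.1 + r/2] : set R) `*` (`[z.2 - r/2, z.2 + r/2] : set R).
pose bx := (`[- B, B] : set R) `*` (`[- B, B] : set R).
have B0 : 0 <= B by rewrite /B /Bnd !addr_ge0.
have msq : measurable sq by apply: measurableX; exact: measurable_itv.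
have mbx : measurable bx by apply: measurableX; exact: measurable_itv.
rewrite /Rintegral; apply: (@xfine_ge _ _ _ (M * ((B - - B) * (B - - B)))).
  have e : @leb2 R sq = ((r * r)%:E)%E.
    rewrite /sq leb2_sq !leb_cc; last 2 first.
    - lra.
    - lra.
    have -> : z.1 + r / 2 - (z.1 - r / 2) = r by field.
    have -> : z.2 + r / 2 - (z.2 - r / 2) = r by field.
    by [].
  apply: le_trans (int_ge_cst (@leb2 R) msq m0 f0 _ _).
  - by rewrite -[X in (_ * X)%E]/(@leb2 R sq) e.
  - move=> y [/= h1 h2]; apply: hd; apply: sq_sub => //.
    + move: h1; rewrite in_itv /= => /andP [u v]; rewrite ler_norml; apply/andP; split; lra.
    + move: h2; rewrite in_itv /= => /andP [u v]; rewrite ler_norml; apply/andP; split; lra.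
  - by move=> x _.
have e : @leb2 R bx = (((B - - B) * (B - - B))%:E)%E.
  by rewrite /bx leb2_sq !leb_cc //; lra.
apply: le_trans (int_le_cst2 (@leb2 R) mbx M0 f0 fM _) _.
  move=> y ty; have [h1 h2] := tri_box ty; split => /=; rewrite in_itv /=.
  by rewrite -ler_norml.
  by rewrite -ler_norml.

by rewrite -[X in (_ * X <= _)%E]/(@leb2 R bx) e.
Qed.

End L.

Unset Implicit Arguments.

Theorem lemma5p2 (R : realType) (rho mup mum : R) :
  0 < rho -> 0 < mup -> 0 < mum ->
  exists C : R, 0 < C /\
    forall (a b c x0 n : pt R) (Ap : 'M[R]_2) (bp : pt R) (qp : R)
           (Am : 'M[R]_2) (bm : pt R) (qm : R),
      tri_nondeg a b c ->
      hT a b c <= rho * rT a b c ->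
      dot n n = 1 ->
      Tplus a b c x0 n !=set0 ->
      Tminus a b c x0 n !=set0 ->
      IFE mup mum a b c x0 n Ap bp qp Am bm qm ->
      L2bdT a b c (gradnorm x0 n Ap Am)
        <= C * (Num.sqrt (hT a b c))^-1 * L2T a b c (gradnorm x0 n Ap Am).
Proof.
move=> hrho hp hm.
pose K := Kc mup mum.
have K1 : 1 <= K := Kc_ge1 mup mum.
have K0 : 0 < K by apply: lt_le_trans K1.
exists (5 * rho * K); split; first by rewrite !mulr_gt0.
move=> a b c x0 n Ap bp qp Am bm qm hnd hhr hn Tp Tm [hst hcont htr].
have [h1 h2] := tangent_eq hnd Tp Tm hcont.
have [fA fB] := frob_bound hp hm hn hst h1 h2 htr.
pose M2 := Num.max (frob2 Ap) (frob2 Am).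
pose m2 := Num.min (frob2 Ap) (frob2 Am).
have hm2 : 0 <= m2 by rewrite /m2 le_min !frob2_ge0.
have hMm : M2 <= K * m2.
  rewrite /M2 /m2; have [hle|hle] := leP (frob2 Ap) (frob2 Am).
    by [].
  by [].
pose g := gradnorm x0 n Ap Am.
have gE x : g x ^+ 2 = frob2 (gradv x0 n Ap Am x) by rewrite sqr_sqrtr // frob2_ge0.
have glo x : m2 <= g x ^+ 2.
  by rewrite gE /gradv; case: ifP => _; rewrite /m2 ge_min lexx ?orbT.
have ghi x : g x ^+ 2 <= M2.
  by rewrite gE /gradv; case: ifP => _; rewrite /M2 le_max lexx ?orbT.
have g0 x : 0 <= g x ^+ 2 by apply: le_trans (glo x).
have M0 : 0 <= M2 by apply: le_trans (ghi a).
have hT0 := hT_pos hnd.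
have [e1 e2 e3] := edges a b c.
set S := seg_int a b (fun x => g x ^+ 2) + seg_int b c (fun x => g x ^+ 2)
          + seg_int c a (fun x => g x ^+ 2).
have S0 : 0 <= S.
  rewrite /S /seg_int !addr_ge0 // mulr_ge0 ?sqrtr_ge0 // /Rintegral fine_ge0 //;
  by apply: integral_ge0 => x _; rewrite lee_fin.
have hS : S <= 6 * hT a b c * M2.
  have s1 := seg_le a b g0 ghi; have s2 := seg_le b c g0 ghi; have s3 := seg_le c a g0 ghi.
  have t1 := ler_wpM2r M0 e1; have t2 := ler_wpM2r M0 e2; have t3 := ler_wpM2r M0 e3.
  rewrite /S; lra.
have rT0 : 0 < rT a b c.
  rewrite ltNge; apply/negP => h; have : rho * rT a b c <= 0 by rewrite pmulr_rle0.
  lra.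
have [r [z [hr r0 hdisc]]] := rT_disc rT0.
have hI := int_lower r0 hm2 glo ghi hdisc.
set I := \int[@leb2 R]_(x in tri a b c) (g x ^+ 2) in hI.
have hhr2 : hT a b c < 2 * rho * r.
  have : rho * (rT a b c / 2) < rho * r by rewrite ltr_pM2l.
  lra.
rewrite /L2bdT /L2T -/g -/S -/I.
have sh0 : 0 < Num.sqrt (hT a b c) by rewrite sqrtr_gt0.
rewrite mulrAC ler_pdivlMr // -sqrtrM //.
have C0 : 0 <= 5 * rho * K by rewrite !mulr_ge0 // ltW.
rewrite -[X in _ <= X * _](ger0_norm C0) -sqrtr_sqr -sqrtrM ?sqr_ge0 // ler_sqrt; last first.
  by rewrite mulr_ge0 ?sqr_ge0 // (le_trans _ hI) // !mulr_ge0 // ltW.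
have u1 : S * hT a b c <= 6 * hT a b c ^+ 2 * M2.
  by have := ler_wpM2r (ltW hT0) hS; rewrite expr2; lra.
have u2 : 6 * hT a b c ^+ 2 * M2 <= 6 * hT a b c ^+ 2 * (K * m2).
  by rewrite ler_wpM2l // mulr_ge0 // sqr_ge0.
have u3 : hT a b c ^+ 2 <= (2 * rho * r) ^+ 2.
  by rewrite !expr2; nra.
have u4 : 6 * hT a b c ^+ 2 * (K * m2) <= 6 * (2 * rho * r) ^+ 2 * (K * m2).
  by rewrite ler_wpM2r ?mulr_ge0 // ?ler_wpM2l // ltW.
have u5 : 6 * (2 * rho * r) ^+ 2 * (K * m2) <= (5 * rho * K) ^+ 2 * (m2 * (r * r)).
  have : 0 <= rho ^+ 2 * r ^+ 2 * K * m2 * (K - 1) by rewrite !mulr_ge0 ?sqr_ge0 ?subr_ge0 // ltW.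
  have -> : (5 * rho * K) ^+ 2 * (m2 * (r * r)) = 25 * (rho ^+ 2 * r ^+ 2 * K * m2 * K) by ring.
  have -> : 6 * (2 * rho * r) ^+ 2 * (K * m2) = 24 * (rho ^+ 2 * r ^+ 2 * K * m2) by ring.
  rewrite mulrBr mulr1 subr_ge0 => h.
  have : 0 <= rho ^+ 2 * r ^+ 2 * K * m2 by rewrite !mulr_ge0 ?sqr_ge0 // ltW.
  lra.
have u6 : (5 * rho * K) ^+ 2 * (m2 * (r * r)) <= (5 * rho * K) ^+ 2 * I.
  by rewrite ler_wpM2l // sqr_ge0.
lra.
Qed.
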